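(* Let $\alpha\in\mathbb N^n$ and let $\mathcal A=\{u_1,\ldots,u_m\}$ be a set of monomials of $S=K[x_1,\ldots,x_n]$, minimal with respect to divisibility, with $K[\mathcal A]$ a homogeneous $K$-algebra. Then for all $i$ and $j$, $$\beta^{S_{\mathcal A}}_{ij}(I_{\mathcal A})\le\beta^{S_{\mathcal A^\alpha}}_{ij}(I_{\mathcal A^\alpha}).$$
   Context: $\mathbb N$ denotes the positive integers. For $\alpha=(k_1,\ldots,k_n)$, $S^\alpha=K[x_{ij}:1\le i\le n,1\le j\le k_i]$, $\pi:S^\alpha\to S$, $x_{ij}\mapsto x_i$, and $\mathcal A^\alpha$ is the set of monomials $w\in S^\alpha$ with $\pi(w)\in\mathcal A$. For a finite set $\mathcal B$ of monomials, $S_{\mathcal B}=K[y_u:u\in\mathcal B]$ is standard graded, $K[\mathcal B]$ is the $K$-algebra generated by $\mathcal B$, and $I_{\mathcal B}=\ker(S_{\mathcal B}\to K[\mathcal B],\ y_u\mapsto u)$. $\beta^{R}_{ij}(M)$ denotes the graded Betti numbers of a graded $R$-module $M$. *)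

(* Defs.v *)
From HB Require Import structures.
From mathcomp Require Import all_boot all_order all_algebra.
From mathcomp Require Import mpoly.
From Stdlib Require Import ClassicalEpsilon.
Set Implicit Arguments. Unset Strict Implicit. Unset Printing Implicit Defensive.
Import GRing.Theory.
Local Open Scope ring_scope.

Definition mdivides n (u v : 'X_{1..n}) : Prop := forall i, (u i <= v i)%N.

Definition div_minimal n (s : seq 'X_{1..n}) : Prop :=
  forall u v, u \in s -> v \in s -> mdivides u v -> u = v.

(* I_A for A = s = [u_1;...;u_m] : kernel of S_A = K[y_1..y_m] -> S, y_k |-> u_k *)
Definition toric_map (K : fieldType) n (s : seq 'X_{1..n})
  (p : {mpoly K[size s]}) : {mpoly K[n]} :=
  mmap (@mpolyC n K) (fun k : 'I_(size s) => 'X_[nth 0%MM s k]) p.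

Definition toric_ideal (K : fieldType) n (s : seq 'X_{1..n})
  (p : {mpoly K[size s]}) : Prop := toric_map p = 0.

Definition is_homog (K : fieldType) N (d : nat) (p : {mpoly K[N]}) : Prop :=
  forall m, m \in msupp p -> mdeg m = d.

Definition hcomp (K : fieldType) N (d : nat) (p : {mpoly K[N]}) : {mpoly K[N]} :=
  \sum_(m <- msupp p | mdeg m == d) p@_m *: 'X_[m].

Definition homog_ideal (K : fieldType) N (I : {mpoly K[N]} -> Prop) : Prop :=
  forall p d, I p -> I (hcomp d p).

(* K[A] is a homogeneous K-algebra: I_A is homogeneous in the standard grading *)
Definition homogeneous_toric (K : fieldType) n (s : seq 'X_{1..n}) : Prop :=
  homog_ideal (@toric_ideal K n s).

Section Dim.
Variables (K : fieldType) (V : lmodType K).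

Definition lin_indep (vs : seq V) : Prop :=
  forall c : nat -> K, \sum_(k < size vs) c k *: vs`_k = 0 ->
    forall k, (k < size vs)%N -> c k = 0.

Definition spans (P : V -> Prop) (vs : seq V) : Prop :=
  forall v, P v -> exists c : nat -> K, v = \sum_(k < size vs) c k *: vs`_k.

Definition has_dim (P : V -> Prop) (d : nat) : Prop :=
  exists vs : seq V, [/\ size vs = d, forall k, (k < size vs)%N -> P vs`_k,
                         lin_indep vs & spans P vs].

(* the dimension of P (meaningful when P is a finite-dimensional subspace) *)
Definition dimv (P : V -> Prop) : nat := epsilon (inhabits 0%N) (has_dim P).
End Dim.

(* Tor^{S}_i(M,K)_j computed from the Koszul resolution of K = S/(y_1..y_N),
   tensored with M (here M = I a homogeneous ideal of S = K[y_1..y_N]).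
   Chains: functions T |-> F T on subsets T of {1..N} (basis e_T of the
   exterior power), with F T in M of degree j - |T|. *)
Section Koszul.
Variables (K : fieldType) (N : nat).
Local Notation S := {mpoly K[N]}.
Local Notation chain := {ffun {set 'I_N} -> S}.

Definition kchain (I : S -> Prop) (i j : nat) (F : chain) : Prop :=
  forall T : {set 'I_N},
    if (#|T| == i) && (i <= j)%N then I (F T) /\ is_homog (j - i) (F T)
    else F T = 0.

(* Koszul differential: e_U (x) f |-> sum_{t in U} (-1)^{#{s in U, s<t}} e_{U\t} (x) y_t f *)
Definition kdiff (F : chain) : chain :=
  [ffun T : {set 'I_N} =>
     \sum_(t : 'I_N | t \notin T)
        (-1) ^+ #|[set s in T | (s < t)%N]| * 'X_t * F (t |: T)].

(* beta_{ij}(I) = dim_K Tor_i(I, K)_j *)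
Definition betti (I : S -> Prop) (i j : nat) : nat :=
  subn (dimv (fun F : chain => kchain I i j F /\ kdiff F = 0))
       (dimv (fun F : chain => exists G, kchain I i.+1 j G /\ F = kdiff G)).
End Koszul.

(* Variables of S^alpha are labelled by 'I_N'; own k = i means the k-th
   variable is some x_{i j}; pi : S^alpha -> S, x_{ij} |-> x_i on monomials. *)
Definition pi_mon n N' (own : 'I_N' -> 'I_n) (w : 'X_{1..N'}) : 'X_{1..n} :=
  [multinom (\sum_(k : 'I_N' | own k == i) w k)%N | i < n].

(* Main.v *)
Require Import Defs.
From HB Require Import structures.
From mathcomp Require Import all_boot all_order all_algebra.
From mathcomp Require Import mpoly.
From mathcomp Require Import zify ring.
From Stdlib Require Import ClassicalEpsilon Classical.
Require Import Defs.
Set Implicit Arguments. Unset Strict Implicit. Unset Printing Implicit Defensive.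
Import GRing.Theory.
Local Open Scope ring_scope.

Definition subsp (K : fieldType) (V : lmodType K) (P : V -> Prop) :=
  P 0 /\ forall a x y, P x -> P y -> P (a *: x + y).

Lemma subsp_sum (K : fieldType) (V : lmodType K) (P : V -> Prop) (vs : seq V) (c : nat -> K) :
  subsp P -> (forall k, (k < size vs)%N -> P vs`_k) ->
  P (\sum_(k < size vs) c k *: vs`_k).
Proof.
move=> [P0 PL] Hv; apply: (big_ind P) => //.
- by move=> x y Px Py; rewrite -[x]scale1r; apply: PL.
- by move=> k _; rewrite -[_ *: _]addr0; apply: PL => //; apply: Hv.
Qed.

Lemma maxQ (Q : nat -> Prop) D : Q 0%N -> (forall k, Q k -> (k <= D)%N) ->
  exists k, Q k /\ ~ Q k.+1.
Proof.
move=> Q0 QD; apply: NNPP => H.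
have: forall k, Q k by elim=> // k IH; apply: NNPP => nQ; apply: H; exists k.
by move=> /(_ D.+1) /QD; rewrite ltnn.
Qed.

Section LinAlg.
Variables (K : fieldType) (V : lmodType K) (W : vectType K) (coord : {linear V -> W}) (Hc : V -> Prop).
Hypothesis coord_inj : forall x y, Hc x -> Hc y -> coord x = coord y -> x = y.

Definition ctuple (vs : seq V) : (size vs).-tuple W := map_tuple coord (in_tuple vs).

Lemma ctupleE vs i : (ctuple vs)`_i = coord vs`_i.
Proof.
rewrite /ctuple /=.
have [lt|le] := ltnP i (size vs); first by rewrite (nth_map 0).
by rewrite !nth_default ?size_map // linear0.
Qed.

Lemma coord_sum (vs : seq V) (c : nat -> K) :
  coord (\sum_(k < size vs) c k *: vs`_k) = \sum_(k < size vs) c k *: (ctuple vs)`_k.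
Proof. by rewrite linear_sum; apply: eq_bigr => k _; rewrite linearZ ctupleE. Qed.

Lemma free_ctuple P (vs : seq V) : subsp P -> (forall v, P v -> Hc v) ->
  (forall k, (k < size vs)%N -> P vs`_k) -> lin_indep vs -> free (ctuple vs).
Proof.
move=> sP PH Pv li; apply/freeP => k Hk i.
pose c n := if @insub nat (fun x => x < size vs)%N 'I_(size vs) n is Some j then k j else 0.
have cE (j : 'I_(size vs)) : c j = k j by rewrite /c valK.
rewrite -cE; apply: li (ltn_ord i).
apply: coord_inj; [exact: PH (subsp_sum _ sP Pv) | by apply: PH; case: sP | ].
rewrite coord_sum linear0 -[RHS]Hk; apply: eq_bigr => j _; by rewrite cE.
Qed.

Definition cnat (vs : seq V) (k : 'I_(size vs) -> K) (n : nat) : K :=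
  if @insub nat (fun x => x < size vs)%N 'I_(size vs) n is Some j then k j else 0.
Lemma cnatE vs k (j : 'I_(size vs)) : cnat k j = k j.
Proof. by rewrite /cnat valK. Qed.

Lemma coord_sumO (vs : seq V) (k : 'I_(size vs) -> K) :
  coord (\sum_(i < size vs) k i *: vs`_i) = \sum_(i < size vs) k i *: (ctuple vs)`_i.
Proof. by rewrite linear_sum; apply: eq_bigr => i _; rewrite linearZ ctupleE. Qed.

Lemma subsp_sumO P (vs : seq V) (k : 'I_(size vs) -> K) : subsp P ->
  (forall i, (i < size vs)%N -> P vs`_i) -> P (\sum_(i < size vs) k i *: vs`_i).
Proof.
move=> sP Pv; have := subsp_sum (cnat k) sP Pv.
by under eq_bigr => i _ do rewrite cnatE.
Qed.

Lemma mem_span_sum n (X : n.-tuple W) (k : 'I_n -> K) :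
  \sum_(i < n) k i *: X`_i \in <<X>>%VS.
Proof.
apply: memv_suml => i _; apply: memvZ; apply: memv_span.
by apply: mem_nth; rewrite size_tuple.
Qed.

Definition vchar P (U : {vspace W}) := forall w, (w \in U) <-> exists2 v, P v & w = coord v.

Lemma vsp_ex P : subsp P -> (forall v, P v -> Hc v) ->
  exists U : {vspace W}, vchar P U.
Proof.
move=> sP PH.
pose Q k := exists vs : seq V, [/\ size vs = k, forall i, (i < size vs)%N -> P vs`_i & free (ctuple vs)].
have [] := @maxQ Q (\dim (fullv : {vspace W})).
- by exists [::]; split => //; apply: nil_free.
- move=> k [vs [<- _ /eqP fr]]; rewrite -[X in (X <= _)%N](size_tuple (ctuple vs)) -fr.
  exact: dimvS (subvf _).
move=> k [[vs [sz Pv fr]] nQ]; exists <<ctuple vs>>%VS => w; split.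
- move=> /coord_span E; exists (\sum_(i < size vs) vector.coord (ctuple vs) i w *: vs`_i).
    exact: (subsp_sumO _ sP Pv).
  by rewrite coord_sumO -E.
- case=> v Pv' ->; apply: NNPP => nin; apply: nQ; exists (v :: vs); split.
  + by rewrite /= sz.
  + by case=> [|i] /= ip; [exact: Pv' | exact: Pv].
  + by rewrite /ctuple /= free_cons; apply/andP; split => //; apply/negP.
Qed.

Lemma vchar_dim P U d : subsp P -> (forall v, P v -> Hc v) -> vchar P U ->
  has_dim P d -> d = \dim U.
Proof.
move=> sP PH hU [bs [sz Pb li sp]].
have fr := free_ctuple sP PH Pb li.
suff <- : <<ctuple bs>>%VS = U by rewrite (eqP fr) size_tuple.
apply/vspaceP => w; apply/idP/idP.
- move=> /coord_span E; apply/hU; exists (\sum_(i < size bs) vector.coord (ctuple bs) i w *: bs`_i).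
    exact: (subsp_sumO _ sP Pb).
  by rewrite coord_sumO -E.
- move=> /hU [v /sp [c ->] ->]; rewrite coord_sum; exact: mem_span_sum.
Qed.

Lemma vchar_has_dim P U : subsp P -> (forall v, P v -> Hc v) -> vchar P U ->
  has_dim P (\dim U).
Proof.
move=> sP PH hU.
pose Q k := exists vs : seq V, [/\ size vs = k, forall i, (i < size vs)%N -> P vs`_i & free (ctuple vs)].
have [] := @maxQ Q (\dim U).
- by exists [::]; split => //; apply: nil_free.
- move=> k [vs [<- Pv /eqP fr]]; rewrite -[X in (X <= _)%N](size_tuple (ctuple vs)) -fr.
  apply: dimvS; apply/span_subvP => x /mapP [v /(nthP 0) [i ip <-] ->]; apply/hU.
  by exists vs`_i => //; apply: Pv.
move=> k [[vs [sz Pv fr]] nQ].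
have spv : forall v, P v -> exists c : nat -> K, v = \sum_(k < size vs) c k *: vs`_k.
  move=> v Pv'; have: coord v \in <<ctuple vs>>%VS.
    apply: NNPP => nin; apply: nQ; exists (v :: vs); split.
    + by rewrite /= sz.
    + by case=> [|i] /= ip; [exact: Pv' | exact: Pv].
    + by rewrite /ctuple /= free_cons; apply/andP; split => //; apply/negP.
  move=> /coord_span E; exists (cnat (fun i => vector.coord (ctuple vs) i (coord v))).
  apply: coord_inj; [exact: PH | exact: PH (subsp_sum _ sP Pv) |].
  rewrite coord_sum {1}E; apply: eq_bigr => i _; by rewrite cnatE.
have li : lin_indep vs.
  move=> c Hc0 i ip; have /freeP := fr.
  move=> /(_ (fun j => c j)) H; have := H _ (Ordinal ip); apply.
  by rewrite -coord_sum Hc0 linear0.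
suff -> : \dim U = size vs by exists vs; split.
apply/esym/(vchar_dim sP PH hU); exists vs; split => //.
Qed.

Lemma dimvE P U : subsp P -> (forall v, P v -> Hc v) -> vchar P U -> dimv P = \dim U.
Proof.
move=> sP PH hU; apply: (vchar_dim sP PH hU); rewrite /dimv.
apply: epsilon_spec; exists (\dim U); exact: vchar_has_dim.
Qed.

Lemma dimv_basis P : subsp P -> (forall v, P v -> Hc v) -> has_dim P (dimv P).
Proof.
move=> sP PH; have [U hU] := vsp_ex sP PH; rewrite (dimvE sP PH hU).
exact: vchar_has_dim.
Qed.

Lemma dimv_indep P vs : subsp P -> (forall v, P v -> Hc v) ->
  (forall i, (i < size vs)%N -> P vs`_i) -> lin_indep vs -> (size vs <= dimv P)%N.
Proof.
move=> sP PH Pv li; have [U hU] := vsp_ex sP PH; rewrite (dimvE sP PH hU).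
have /eqP fr := free_ctuple sP PH Pv li.
rewrite -[X in (X <= _)%N](size_tuple (ctuple vs)) -fr.
apply: dimvS; apply/span_subvP => x /mapP [v /(nthP 0) [i ip <-] ->]; apply/hU.
by exists vs`_i => //; apply: Pv.
Qed.

Lemma dimv_mono P Q : subsp P -> subsp Q -> (forall v, Q v -> Hc v) ->
  (forall v, P v -> Q v) -> (dimv P <= dimv Q)%N.
Proof.
move=> sP sQ QH PQ.
have [bs [sz Pb li _]] := dimv_basis sP (fun v Pv => QH v (PQ v Pv)).
rewrite -sz; apply: dimv_indep => // i ip; exact/PQ/Pb.
Qed.

Definition psum (P Q : V -> Prop) v := exists2 x, P x & exists2 y, Q y & v = x + y.
Definition pcap (P Q : V -> Prop) v := P v /\ Q v.

Lemma subsp_cap P Q : subsp P -> subsp Q -> subsp (pcap P Q).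
Proof. by move=> [P0 PL] [Q0 QL]; split=> // a x y [? ?] [? ?]; split; auto. Qed.

Lemma subsp_psum P Q : subsp P -> subsp Q -> subsp (psum P Q).
Proof.
move=> [P0 PL] [Q0 QL]; split; first by exists 0 => //; exists 0 => //; rewrite addr0.
move=> a _ _ [x1 Px1 [y1 Qy1 ->]] [x2 Px2 [y2 Qy2 ->]].
exists (a *: x1 + x2); first exact: PL.
exists (a *: y1 + y2); first exact: QL.
by rewrite scalerDr addrACA.
Qed.

Hypothesis Hc_sub : subsp Hc.

Lemma dimv_sumcap P Q : subsp P -> subsp Q -> (forall v, P v -> Hc v) -> (forall v, Q v -> Hc v) ->
  (dimv (psum P Q) + dimv (pcap P Q) = dimv P + dimv Q)%N.
Proof.
move=> sP sQ PH QH.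
have [UP hP] := vsp_ex sP PH; have [UQ hQ] := vsp_ex sQ QH.
have SH : forall v, psum P Q v -> Hc v.
  move=> _ [x Px [y Qy ->]]; have [_ L] := Hc_sub.
  by rewrite -[x]scale1r; apply: L; auto.
have CH : forall v, pcap P Q v -> Hc v by move=> v [/PH].
rewrite (dimvE sP PH hP) (dimvE sQ QH hQ) -dimv_sum_cap.
rewrite (@dimvE _ (UP + UQ)%VS (subsp_psum sP sQ) SH).
  rewrite (@dimvE _ (UP :&: UQ)%VS (subsp_cap sP sQ) CH) //.
  move=> w; rewrite memv_cap; split.
  - case/andP => /hP [x Px Ex] /hQ [y Qy E]; exists x => //; split => //.
    by rewrite Ex in E; have -> := coord_inj (PH _ Px) (QH _ Qy) E.
  - by case=> v [Pv Qv] ->; apply/andP; split; [apply/hP | apply/hQ]; exists v.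
move=> w; split.
- move=> /memv_addP [u /hP [x Px Eu] [v /hQ [y Qy Ev] ->]]; rewrite Eu Ev.
  by exists (x + y); [exists x => //; exists y | rewrite linearD].
- case=> _ [x Px [y Qy ->]] ->; rewrite linearD; apply: memv_add.
  + by apply/hP; exists x.
  + by apply/hQ; exists y.
Qed.

End LinAlg.




Lemma cardS_sum (T : finType) (A : {set T}) (P : pred T) :
  #|[set s in A | P s]| = (\sum_(s in A) (P s : nat))%N.
Proof.
rewrite -sum1_card.
rewrite [LHS](eq_bigl (fun s => (s \in A) && P s)); last by move=> x; rewrite inE.
by rewrite big_mkcondr /=; apply: eq_bigr => x _; case: (P x).
Qed.

Lemma sign_mul (R : ringType) (e : nat) (x : R) : (-1) ^+ e * x = if odd e then - x else x.
Proof. by rewrite -signr_odd mulr_sign. Qed.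

Section Chains.
Variables (K : fieldType) (N : nat).
Local Notation chain := {ffun {set 'I_N} -> {mpoly K[N]}}.

Definition Wc b := {ffun ({set 'I_N} * 'X_{1..N < b}) -> K^o}.
Definition coordc b (F : chain) : Wc b := [ffun p => (F p.1)@_(bmnm p.2)].
Lemma coordc_lin b : linear (coordc b).
Proof. move=> a x y; apply/ffunP => p; rewrite !ffunE mcoeffD mcoeffZ. by []. Qed.
HB.instance Definition _ b := GRing.isLinear.Build K chain (Wc b) *:%R (coordc b) (@coordc_lin b).

Definition Hcb b (F : chain) := forall T, (msize (F T) <= b)%N.

Lemma Hcb_sub b : subsp (Hcb b).
Proof.
split=> [T|a x y Hx Hy T]; first by rewrite ffunE msize0.
rewrite !ffunE; apply: leq_trans (msizeD_le _ _) _; rewrite geq_max Hy andbT.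
exact: leq_trans (msizeZ_le _ _) (Hx T).
Qed.

Lemma coordc_inj b x y : Hcb b x -> Hcb b y -> coordc b x = coordc b y -> x = y.
Proof.
move=> Hx Hy E; apply/ffunP => T.
rewrite (mpolywE (Hx T)) (mpolywE (Hy T)); apply: eq_bigr => m _.
by have := congr1 (fun w : Wc b => w (T, m)) E; rewrite !ffunE /= => ->.
Qed.

Lemma homog_msize d (p : {mpoly K[N]}) : is_homog d p -> (msize p <= d.+1)%N.
Proof.
move=> H; rewrite msizeE; apply/bigmax_leqP_seq => m mp _.
by rewrite (H m mp).
Qed.

Lemma homogE d (p : {mpoly K[N]}) : is_homog d p <-> p \is d.-homog.
Proof. by split => [H|/dhomogP H m mp]; [apply/dhomogP => m mp; apply: H | apply: H]. Qed.

Lemma subsp_homog d : subsp (@is_homog K N d).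
Proof.
split; first by apply/homogE; apply: rpred0.
by move=> a x y /homogE hx /homogE hy; apply/homogE; rewrite rpredD ?rpredZ.
Qed.

Lemma kchain_H (I : {mpoly K[N]} -> Prop) i j (F : chain) : kchain I i j F -> Hcb (j - i).+1 F.
Proof.
move=> H T; have := H T; case: ifP => _; first by case=> _ /homog_msize.
by move=> ->; rewrite msize0.
Qed.

Lemma kchain_sub (I : {mpoly K[N]} -> Prop) i j : subsp I -> subsp (kchain I i j).
Proof.
move=> [I0 IL]; split=> [T|a x y Hx Hy T]; rewrite !ffunE.
  by case: ifP => _ //; split => //; case: (subsp_homog (j - i)).
have := Hx T; have := Hy T; case: ifP => _.
  by case=> Iy hy [Ix hx]; split; [apply: IL | case: (subsp_homog (j - i)) => _; apply].
by move=> -> ->; rewrite scaler0 addr0.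
Qed.

Lemma kdiff_lin a (F G : chain) : kdiff (a *: F + G) = a *: kdiff F + kdiff G.
Proof.
apply/ffunP => T; rewrite !ffunE scaler_sumr -big_split; apply: eq_bigr => t _.
by rewrite !ffunE mulrDr scalerAr.
Qed.

Lemma kdiff0 : kdiff (0 : chain) = 0.
Proof. by apply/ffunP => T; rewrite !ffunE big1 // => t _; rewrite ffunE mulr0. Qed.

Definition idealP (I : {mpoly K[N]} -> Prop) := subsp I /\ forall t p, I p -> I ('X_t * p).

Lemma ideal_sign (I : {mpoly K[N]} -> Prop) e t p : idealP I -> I p -> I ((-1) ^+ e * 'X_t * p).
Proof.
move=> [[I0 IL] IX] Ip; rewrite -mulrA sign_mul; case: ifP => _; last exact: IX.
by rewrite -scaleN1r -[X in I X]addr0; apply: IL => //; apply: IX.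
Qed.

Lemma kdiff_kchain (I : {mpoly K[N]} -> Prop) i j (G : chain) : idealP I -> kchain I i.+1 j G -> kchain I i j (kdiff G).
Proof.
move=> hI HG T; rewrite ffunE.
have Gz : forall t, t \notin T -> ~~ ((#|T| == i) && (i < j)%N) -> G (t |: T) = 0.
  move=> t tT; have := HG (t |: T); rewrite cardsU1 tT add1n eqSS.
  by case: ifP => // ->.
case: ifP => [/andP [/eqP cT ij]|nc].
  have [ij'|ji] := ltnP i j.
    split.
      apply: (big_ind I); first by case: hI => [[]].
        by move=> x y Ix Iy; case: hI => [[_ IL] _]; rewrite -[x]scale1r; apply: IL.
      move=> t tT; apply: ideal_sign => //; have := HG (t |: T).
      by rewrite cardsU1 tT cT eqxx ij' => -[].
    apply/homogE; apply: rpred_sum => t tT.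
    have := HG (t |: T); rewrite cardsU1 tT cT eqxx ij' => -[_ /homogE h].
    have -> : (j - i = 0 + 1 + (j - i.+1))%N by rewrite add0n add1n subnSK.
    apply: dhomogM => //; apply: dhomogM.
      by rewrite -signr_odd; case: (odd _); rewrite ?expr0 ?expr1 ?rpredN dhomog1.
    by rewrite dhomogX; apply/eqP; apply: mdeg1.
  have -> : \sum_(t | t \notin T) (-1) ^+ #|[set s in T | (s < t)%N]| * 'X_t * G (t |: T) = 0.
    apply: big1 => t tT; rewrite Gz ?mulr0 //; apply/negP => /andP [_].
    by rewrite ltnNge ji.
  by split; [case: hI => [[]] | case: (subsp_homog (j - i))].
by rewrite big1 // => t tT; rewrite Gz ?mulr0 //; apply/negP => /andP [a b]; move: nc; rewrite a (ltnW b).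
Qed.

Lemma card_lt_U1 (T : {set 'I_N}) (t u : 'I_N) : t \notin T ->
  #|[set s in t |: T | (s < u)%N]| = ((t < u)%N + #|[set s in T | (s < u)%N]|)%N.
Proof. by move=> tT; rewrite !cardS_sum big_setU1. Qed.

Lemma pair_cancel (R : zmodType) (T : {set 'I_N}) (A : 'I_N -> 'I_N -> R) :
  (forall t u, t \notin T -> u \notin T -> (t < u)%N -> A t u + A u t = 0) ->
  \sum_(t | t \notin T) \sum_(u | u \notin t |: T) A t u = 0.
Proof.
move=> HA.
have E1 : forall t, \sum_(u | u \notin t |: T) A t u =
   \sum_(u | (u \notin T) && (u < t)%N) A t u + \sum_(u | (u \notin T) && (t < u)%N) A t u.
  move=> t; rewrite (bigID (fun u : 'I_N => (u < t)%N)) /=; congr (_ + _); apply: eq_bigl => u;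
  rewrite in_setU1 negb_or -val_eqE /=; case: (ltngtP u t) => h;
  by rewrite ?andbT ?andbF.
under eq_bigr => t _ do rewrite E1.
rewrite big_split /=.
rewrite (exchange_big_dep (fun u => u \notin T)) /=; last by move=> t u _ /andP [].
rewrite -big_split /=; apply: big1 => t tT.
rewrite [X in X + _](eq_bigl (fun u => (u \notin T) && (t < u)%N)); last first.
  by move=> u; rewrite tT.
rewrite -big_split /=; apply: big1 => u /andP [uT tu].
by rewrite addrC; apply: HA.
Qed.

Lemma kdiff2 (F : chain) : kdiff (kdiff F) = 0.
Proof.
apply/ffunP => T; rewrite !ffunE.
under eq_bigr => t tT do rewrite ffunE mulr_sumr.
apply: pair_cancel => t u tT uT tu.
rewrite !card_lt_U1 // tu ltnNge (ltnW tu) /= add0n add1n exprS setUCA.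
set a := (-1) ^+ _; set b := (-1) ^+ _.
ring.
Qed.

Definition Zp (I : {mpoly K[N]} -> Prop) i j (F : chain) := kchain I i j F /\ kdiff F = 0.
Definition Bp (I : {mpoly K[N]} -> Prop) i j (F : chain) := exists G, kchain I i.+1 j G /\ F = kdiff G.

Lemma betti_ZB I i j : betti I i j = (dimv (Zp I i j) - dimv (Bp I i j))%N.
Proof. by []. Qed.

Lemma subsp_Zp I i j : subsp I -> subsp (Zp I i j).
Proof.
move=> sI; have [k0 kL] := kchain_sub i j sI; split; first by split; rewrite ?kdiff0.
by move=> a x y [kx dx] [ky dy]; split; [apply: kL | rewrite kdiff_lin dx dy scaler0 addr0].
Qed.

Lemma subsp_Bp I i j : subsp I -> subsp (Bp I i j).
Proof.
move=> sI; have [k0 kL] := kchain_sub i.+1 j sI; split; first by exists 0; rewrite kdiff0.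
move=> a _ _ [x [kx ->]] [y [ky ->]]; exists (a *: x + y); split; first exact: kL.
by rewrite kdiff_lin.
Qed.

Lemma Zp_H I i j F : Zp I i j F -> Hcb (j - i).+1 F.
Proof. by case=> /kchain_H. Qed.

Lemma Bp_Zp I i j F : idealP I -> Bp I i j F -> Zp I i j F.
Proof. by move=> hI [G [kG ->]]; split; [apply: kdiff_kchain | apply: kdiff2]. Qed.
End Chains.


Section Ab.
Variable K : fieldType.
Local Notation chain N := {ffun {set 'I_N} -> {mpoly K[N]}}.

Lemma lin0 (U V : lmodType K) (f : U -> V) : linear f -> f 0 = 0.
Proof.
move=> hf; have := hf 1 0 0; rewrite scaler0 addr0 scale1r => /esym.
by rewrite -{3}[f 0]addr0 => /addrI.
Qed.

Lemma lin_sum (U V : lmodType K) (f : U -> V) : linear f ->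
  forall (Ty : Type) (r : seq Ty) (P : pred Ty) (F : Ty -> U),
  f (\sum_(i <- r | P i) F i) = \sum_(i <- r | P i) f (F i).
Proof.
move=> hf Ty r P F.
have f0 : f 0 = 0.
  have := hf 1 0 0; rewrite scaler0 addr0 scale1r => /esym.
  by rewrite -{3}[f 0]addr0 => /addrI.
apply: (big_morph f) => // x y; by rewrite -[x in f (x + _)]scale1r hf scale1r.
Qed.

Lemma linZ (U V : lmodType K) (f : U -> V) : linear f -> forall a x, f (a *: x) = a *: f x.
Proof.
move=> hf a x.
have f0 : f 0 = 0.
  have := hf 1 0 0; rewrite scaler0 addr0 scale1r => /esym.
  by rewrite -{3}[f 0]addr0 => /addrI.
by rewrite -[a *: x]addr0 hf f0 addr0.
Qed.

Lemma dim_le_map N1 N2 b1 b2 (P : chain N1 -> Prop) (Q : chain N2 -> Prop)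
  (phi : chain N1 -> chain N2) (psi : chain N2 -> chain N1) :
  subsp P -> subsp Q -> (forall v, P v -> Hcb b1 v) -> (forall v, Q v -> Hcb b2 v) ->
  (forall v, P v -> Q (phi v)) -> (forall v, P v -> psi (phi v) = v) -> linear psi ->
  (dimv P <= dimv Q)%N.
Proof.
move=> sP sQ PH QH PQ PK lpsi.
have [bs [sz Pb li _]] := dimv_basis (@coordc_inj K N1 b1) sP PH.
rewrite -sz -(size_map phi).
apply: (dimv_indep (@coordc_inj K N2 b2)) => //.
  by move=> i; rewrite size_map => ip; rewrite (nth_map 0) //; apply/PQ/Pb.
move=> c Hc0 i ip; apply: li; last by rewrite size_map in ip.
have := congr1 psi Hc0; rewrite lin_sum // (lin0 lpsi) => E; rewrite -[RHS]E size_map; apply: eq_bigr => k _.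
rewrite linZ // (nth_map 0) ?ltn_ord // PK //; exact: Pb.
Qed.

Theorem betti_retract m M (I : {mpoly K[m]} -> Prop) (I' : {mpoly K[M]} -> Prop) i j
  (sig : chain m -> chain M) (rho : chain M -> chain m) :
  idealP I -> idealP I' -> linear sig -> linear rho ->
  (forall F, rho (sig F) = F) ->
  (forall F, Zp I i j F -> Zp I' i j (sig F)) ->
  (forall G, kchain I' i.+1 j G -> kchain I i.+1 j (rho G)) ->
  (forall G, rho (kdiff G) = kdiff (rho G)) ->
  (betti I i j <= betti I' i j)%N.
Proof.
move=> hI hI' lsig lrho rs sZ rK rd.
rewrite !betti_ZB.
set Z := Zp I i j; set B := Bp I i j; set Z' := Zp I' i j; set B' := Bp I' i j.
pose b := (j - i).+1.
have sZp : subsp Z by apply: subsp_Zp; case: hI.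
have sBp : subsp B by apply: subsp_Bp; case: hI.
have sZp' : subsp Z' by apply: subsp_Zp; case: hI'.
have sBp' : subsp B' by apply: subsp_Bp; case: hI'.
have ZH : forall v, Z v -> Hcb b v by move=> v; apply: Zp_H.
have BH : forall v, B v -> Hcb b v by move=> v /(Bp_Zp hI); apply: Zp_H.
have ZH' : forall v, Z' v -> Hcb b v by move=> v; apply: Zp_H.
have BZ' : forall v, B' v -> Z' v by move=> v; apply: Bp_Zp.
have BH' : forall v, B' v -> Hcb b v by move=> v /BZ'; apply: ZH'.
pose Zs := fun x => exists2 z, Z z & x = sig z.
have sZs : subsp Zs.
  split; first by exists 0; [case: sZp | rewrite (lin0 lsig)].
  move=> a _ _ [x Zx ->] [y Zy ->]; exists (a *: x + y); last by rewrite lsig.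
  by case: sZp => _; apply.
have ZsZ' : forall v, Zs v -> Z' v by move=> _ [z Zz ->]; apply: sZ.
have ZsH : forall v, Zs v -> Hcb b v by move=> v /ZsZ'; apply: ZH'.
have D4 := dimv_sumcap (@coordc_inj K M b) (@Hcb_sub K M b) sZs sBp' ZsH BH'.
have D1 : (dimv (psum Zs B') <= dimv Z')%N.
  apply: (dimv_mono (@coordc_inj K M b) (subsp_psum sZs sBp') sZp' ZH').
  move=> v [x Zx [y By ->]]; rewrite -[x]scale1r; case: sZp' => _; apply.
  exact: ZsZ'. exact: BZ'.
have D2 : (dimv Z <= dimv Zs)%N.
  apply: (dim_le_map sZp sZs ZH ZsH (phi := sig) (psi := rho)) => // v Zv.
  by exists v.
have D3 : (dimv (pcap Zs B') <= dimv B)%N.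
  apply: (dim_le_map (subsp_cap sZs sBp') sBp (b1 := b) _ BH (phi := rho) (psi := sig)) => //.
  - by move=> v [/ZsH].
  - move=> _ [_ [G [kG ->]]]; exists (rho G); split; [exact: rK | exact: rd].
  - by move=> _ [[z _ ->] _]; rewrite rs.
move: D4 D1 D2 D3; set a1 := dimv (psum _ _); set a2 := dimv (pcap _ _).
move=> D4 D1 D2 D3.
lia.
Qed.
End Ab.


Section Poly.
Variable K : fieldType.

Lemma mmap_Z n n' (h : 'I_n -> {mpoly K[n']}) a p :
  mmap (@mpolyC n' K) h (a *: p) = a *: mmap (@mpolyC n' K) h p.
Proof. by rewrite mmapZ mul_mpolyC. Qed.

Lemma mmap_Xi n n' (h : 'I_n -> {mpoly K[n']}) i :
  mmap (@mpolyC n' K) h 'X_i = h i.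
Proof. by rewrite mmapX mmap1U. Qed.

Lemma rmorph_id_mpoly n (phi : {rmorphism {mpoly K[n]} -> {mpoly K[n]}}) :
  (forall c, phi c%:MP = c%:MP) -> (forall i, phi 'X_i = 'X_i) -> forall p, phi p = p.
Proof.
move=> hC hX p; rewrite [p]mpolyE rmorph_sum; apply: eq_bigr => m _.
rewrite -mul_mpolyC rmorphM hC; congr (_ * _).
by rewrite mpolyXE_id rmorph_prod; apply: eq_bigr => i _; rewrite rmorphXn hX.
Qed.

Lemma mmap_homog n n' (h : 'I_n -> {mpoly K[n']}) d p :
  (forall i, h i = 0 \/ exists j, h i = 'X_j) -> is_homog d p ->
  is_homog d (mmap (@mpolyC n' K) h p).
Proof.
move=> hh /homogE /dhomogP hp; apply/homogE.
rewrite /mmap big_seq; apply: rpred_sum => m mp.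
rewrite mul_mpolyC; apply: rpredZ.
have E : (\sum_i m i)%N = d by rewrite -mdegE; exact: (hp m mp).
rewrite -E.
rewrite /mmap1; elim/big_rec2: _ => [|i d0 q _ hq]; first exact: dhomog1.
apply: dhomogM => //.
case: (hh i) => [->|[j ->]].
  case: (m i) => [|k]; first by rewrite expr0 dhomog1.
  by rewrite expr0n /= rpred0.
by rewrite -[X in X.-homog]mul1n; apply: dhomogMn; rewrite dhomogX; apply/eqP; exact: mdeg1.
Qed.
End Poly.

Section Relabel.
Variables (K : fieldType) (m M : nat) (f : 'I_m -> 'I_M) (g : 'I_M -> 'I_m) (keep : pred 'I_M).
Hypotheses (gf : forall k, g (f k) = k) (fg : forall w, keep w -> f (g w) = w)
  (kf : forall k, keep (f k)).
Local Notation chain N := {ffun {set 'I_N} -> {mpoly K[N]}}.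

Definition hs (k : 'I_m) : {mpoly K[M]} := 'X_(f k).
Definition hr (w : 'I_M) : {mpoly K[m]} := if keep w then 'X_(g w) else 0.
Local Notation sp := (mmap (@mpolyC M K) hs).
Local Notation rp := (mmap (@mpolyC m K) hr).

Lemma f_inj : injective f.
Proof. exact: can_inj gf. Qed.

Lemma rp_sp p : rp (sp p) = p.
Proof.
have := @rmorph_id_mpoly K m ((mmap (@mpolyC m K) hr) \o (mmap (@mpolyC M K) hs))%FUN.
apply=> [c|i] /=; first by rewrite !mmapC.
by rewrite !mmap_Xi /hs /hr /= kf gf.
Qed.

Lemma sp_homog d p : is_homog d p -> is_homog d (sp p).
Proof. apply: mmap_homog => i; right; by exists (f i). Qed.

Lemma rp_homog d p : is_homog d p -> is_homog d (rp p).
Proof. apply: mmap_homog => i; rewrite /hr; case: (keep i); [right; by exists (g i) | by left]. Qed.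

Definition epsE (T : {set 'I_m}) : nat :=
  (\sum_(s in T) \sum_(s' in T) ((s < s')%N && (f s' < f s)%N))%N.
Definition eps (T : {set 'I_m}) : K := (-1) ^+ epsE T.

Lemma eps2 T : eps T * eps T = 1.
Proof. by rewrite /eps -expr2 sqrr_sign. Qed.

Lemma parity_term (s t : 'I_m) : s != t ->
  (((t < s)%N && (f s < f t)%N) + ((s < t)%N && (f t < f s)%N) + (s < t)%N =
   (f s < f t)%N + 2 * ((s < t)%N && (f t < f s)%N))%N.
Proof.
move=> st; have fst : f s != f t by apply: contra st => /eqP /f_inj ->.
move: st fst; rewrite -!val_eqE /=.
case: (ltngtP s t) => // h1; case: (ltngtP (f s) (f t)) => //= h2; by [].
Qed.

Lemma SI (T : {set 'I_m}) (t : 'I_m) : t \notin T ->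
  eps (t |: T) * (-1) ^+ #|[set s in T | (s < t)%N]| =
  eps T * (-1) ^+ #|[set s' in f @: T | (s' < f t)%N]|.
Proof.
move=> tT; rewrite /eps -!exprD -[LHS]signr_odd -[RHS]signr_odd.
have E1 : epsE (t |: T) = (epsE T + \sum_(s in T) (((t < s)%N && (f s < f t)%N) + ((s < t)%N && (f t < f s)%N)))%N.
  rewrite /epsE big_setU1 //= big_setU1 //= ltnn /= add0n.
  under [X in (_ + X)%N = _]eq_bigr => s sT do rewrite big_setU1 //=.
  rewrite big_split /= [RHS]addnC addnA; congr (_ + _)%N.
  by rewrite -big_split.
rewrite E1 !cardS_sum big_imset /=; last by move=> x y _ _; apply: f_inj.
rewrite -addnA -big_split /=.
have -> : (\sum_(i in T) ((((t < i)%N && (f i < f t)%N) + ((i < t)%N && (f t < f i)%N) + (i < t)%N))%N)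
   = (\sum_(i in T) ((f i < f t)%N + 2 * ((i < t)%N && (f t < f i)%N)))%N.
  apply: eq_bigr => s sT; apply: parity_term; apply: contraNneq tT => <-; done.
by rewrite big_split /= -big_distrr /= addnA oddD [odd (2 * _)]oddM /= addbF.
Qed.

Definition sigc (F : chain m) : chain M :=
  [ffun T' : {set 'I_M} => if T' \subset [set w | keep w]
     then eps (g @: T') *: sp (F (g @: T')) else 0].
Definition rhoc (G : chain M) : chain m :=
  [ffun T : {set 'I_m} => eps T *: rp (G (f @: T))].

Lemma gfT (T : {set 'I_m}) : g @: (f @: T) = T.
Proof. by rewrite -imset_comp (eq_imset _ gf) imset_id. Qed.

Lemma fgT (T' : {set 'I_M}) : T' \subset [set w | keep w] -> f @: (g @: T') = T'.
Proof.
move=> /subsetP sub; rewrite -imset_comp -[RHS]imset_id; apply: eq_in_imset => w wT.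
by apply: fg; have := sub w wT; rewrite inE.
Qed.

Lemma fT_keep (T : {set 'I_m}) : f @: T \subset [set w | keep w].
Proof. by apply/subsetP => _ /imsetP [x _ ->]; rewrite inE kf. Qed.

Lemma lin_sigc : linear sigc.
Proof.
move=> a x y; apply/ffunP => T'; rewrite !ffunE.
case: ifP => _; last by rewrite scaler0 addr0.
by rewrite ?ffunE raddfD /= mmap_Z scalerDr !scalerA mulrC.
Qed.

Lemma lin_rhoc : linear rhoc.
Proof.
move=> a x y; apply/ffunP => T; rewrite !ffunE.
by rewrite ?ffunE raddfD /= mmap_Z scalerDr !scalerA mulrC.
Qed.

Lemma rho_sig F : rhoc (sigc F) = F.
Proof.
apply/ffunP => T; rewrite !ffunE fT_keep gfT mmap_Z rp_sp scalerA.
by rewrite eps2 scale1r.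
Qed.

Lemma reindex_keep (R : nmodType) (T : {set 'I_m}) (H : 'I_M -> R) :
  \sum_(t' | (t' \notin f @: T) && keep t') H t' = \sum_(t | t \notin T) H (f t).
Proof.
rewrite (reindex_onto f g) => [|w /andP [_ kw]]; last exact: fg.
by apply: eq_bigl => t; rewrite (mem_imset _ _ f_inj) kf gf eqxx !andbT.
Qed.

Lemma sign_fix (a a' : nat) (e0 e1 : K) :
  e1 * (-1) ^+ a = e0 * (-1) ^+ a' -> (-1) ^+ a' * e1 = e0 * (-1) ^+ a.
Proof.
move=> S; set u := (-1) ^+ a; set v := (-1) ^+ a'.
have uu : u * u = 1 by rewrite /u -expr2 sqrr_sign.
have vv : v * v = 1 by rewrite /v -expr2 sqrr_sign.
have -> : v * e1 = v * e1 * (u * u) by rewrite uu mulr1.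
by rewrite mulrA -(mulrA v e1 u) S mulrCA vv mulr1.
Qed.

Lemma sp_sgnX e t p : sp ((-1) ^+ e * 'X_t * p) = (-1) ^+ e * 'X_(f t) * sp p.
Proof. by rewrite !rmorphM /= rmorph_sign mmap_Xi. Qed.

Lemma rp_sgnX e t p : rp ((-1) ^+ e * 'X_t * p) = (-1) ^+ e * hr t * rp p.
Proof. by rewrite !rmorphM /= rmorph_sign mmap_Xi. Qed.

Lemma sig_kdiff F : kdiff (sigc F) = sigc (kdiff F).
Proof.
apply/ffunP => T'; rewrite !ffunE.
case: ifP => sub; last first.
  apply: big1 => t' _; rewrite ffunE ifF ?mulr0 //; apply: negbTE; apply: contraFN sub.
  by apply: subset_trans; apply: subsetUr.
rewrite -(fgT sub); move: (g @: T') => T {sub T'}; rewrite gfT.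
rewrite (bigID keep) /= [X in _ + X]big1 ?addr0; last first.
  move=> t' /andP [_ kt]; rewrite ffunE ifF ?mulr0 //; apply: negbTE.
  apply/negP => /subsetP /(_ t' (setU11 _ _)); rewrite inE.
  by move/negbTE: kt => ->.
rewrite reindex_keep [X in eps T *: X]raddf_sum scaler_sumr; apply: eq_bigr => t tT.
rewrite ffunE -imsetU1 fT_keep gfT /= sp_sgnX.
have S := sign_fix (SI tT).
rewrite -!mul_mpolyC.
rewrite -[(-1) ^+ #|[set s' in _ | _]|](rmorph_sign (@mpolyC M K)).
rewrite -[(-1) ^+ #|[set s in T | _]|](rmorph_sign (@mpolyC M K)).
set P := sp _; set X := 'X_(f t).
transitivity (((-1) ^+ #|[set s' in f @: T | (s' < f t)%N]| * eps (t |: T))%:MP * (X * P)).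
  by rewrite rmorphM /=; ring.
by rewrite S rmorphM /=; ring.
Qed.

Lemma rho_kdiff G : rhoc (kdiff G) = kdiff (rhoc G).
Proof.
apply/ffunP => T; rewrite !ffunE.
rewrite [X in eps T *: X]raddf_sum scaler_sumr.
rewrite (bigID keep) /= [X in _ + X]big1 ?addr0; last first.
  by move=> t' /andP [_ kt]; rewrite /= rp_sgnX /hr (negbTE kt) mulr0 mul0r scaler0.
rewrite reindex_keep; apply: eq_bigr => t tT.
rewrite /= rp_sgnX /hr kf gf ffunE imsetU1.
have S := SI tT.
rewrite -!mul_mpolyC.
rewrite -[(-1) ^+ #|[set s' in _ | _]|](rmorph_sign (@mpolyC m K)).
rewrite -[(-1) ^+ #|[set s in T | _]|](rmorph_sign (@mpolyC m K)).
set P := rp _; set X := 'X_t.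
transitivity ((eps T * (-1) ^+ #|[set s' in f @: T | (s' < f t)%N]|)%:MP * (X * P)).
  by rewrite rmorphM /=; ring.
by rewrite -S rmorphM /=; ring.
Qed.

Lemma homog0 N d : is_homog d (0 : {mpoly K[N]}).
Proof. by case: (subsp_homog K N d). Qed.

Lemma homogZ N d a (p : {mpoly K[N]}) : is_homog d p -> is_homog d (a *: p).
Proof. by move=> h; case: (subsp_homog K N d) => h0 hL; rewrite -[_ *: _]addr0; apply: hL. Qed.

Lemma sig_kchain (I : {mpoly K[m]} -> Prop) (I' : {mpoly K[M]} -> Prop) i j F :
  subsp I' -> (forall p, I p -> I' (sp p)) -> kchain I i j F -> kchain I' i j (sigc F).
Proof.
move=> [I'0 I'L] hI kF T'; rewrite ffunE.
case: (boolP (T' \subset [set w | keep w])) => sub; last first.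
  by case: ifP => _ //; split => //; apply: homog0.
have cT : #|g @: T'| = #|T'|.
  apply: card_in_imset => x y xT yT E.
  have /subsetP := sub; move=> sb; have := sb x xT; have := sb y yT; rewrite !inE => ky kx.
  by rewrite -(fg kx) -(fg ky) E.
have := kF (g @: T'); rewrite cT; case: ifP => _.
  case=> Ip hp; split; last by apply: homogZ; apply: sp_homog.
  by rewrite -[_ *: _]addr0; apply: I'L => //; apply: hI.
by move=> ->; rewrite raddf0 scaler0.
Qed.

Lemma rho_kchain (I : {mpoly K[m]} -> Prop) (I' : {mpoly K[M]} -> Prop) i j G :
  subsp I -> (forall p, I' p -> I (rp p)) -> kchain I' i j G -> kchain I i j (rhoc G).
Proof.
move=> [I0 IL] hI kG T; rewrite ffunE.
have := kG (f @: T); rewrite (card_imset _ f_inj); case: ifP => _.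
  case=> Ip hp; split; last by apply: homogZ; apply: rp_homog.
  by rewrite -[_ *: _]addr0; apply: IL => //; apply: hI.
by move=> ->; rewrite raddf0 scaler0.
Qed.

Theorem betti_relabel (I : {mpoly K[m]} -> Prop) (I' : {mpoly K[M]} -> Prop) i j :
  idealP I -> idealP I' -> (forall p, I p -> I' (sp p)) -> (forall p, I' p -> I (rp p)) ->
  (betti I i j <= betti I' i j)%N.
Proof.
move=> hI hI' h1 h2.
apply: (betti_retract hI hI' lin_sigc lin_rhoc rho_sig).
- move=> F [kF dF]; split; first exact: (sig_kchain (proj1 hI') h1 kF).
  by rewrite sig_kdiff dF (lin0 lin_sigc).
- by move=> G kG; exact: (rho_kchain (proj1 hI) h2 kG).
- exact: rho_kdiff.
Qed.
End Relabel.


Section Inst.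
Variables (K : fieldType) (n : nat) (alpha : 'I_n -> nat)
  (alpha_pos : forall i, (0 < alpha i)%N)
  (s : seq 'X_{1..n}) (s_uniq : uniq s)
  (N' : nat) (own : 'I_N' -> 'I_n)
  (own_card : forall i, #|[set k | own k == i]| = alpha i)
  (salpha : seq 'X_{1..N'}) (salpha_uniq : uniq salpha)
  (salpha_def : forall w : 'X_{1..N'}, w \in salpha <-> pi_mon own w \in s).

Lemma rmorph_eq_mpoly m m' (phi1 phi2 : {rmorphism {mpoly K[m]} -> {mpoly K[m']}}) :
  (forall c, phi1 c%:MP = phi2 c%:MP) -> (forall i, phi1 'X_i = phi2 'X_i) -> forall p, phi1 p = phi2 p.
Proof.
move=> hC hX p; rewrite [p]mpolyE !rmorph_sum; apply: eq_bigr => u _.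
rewrite -mul_mpolyC !rmorphM hC; congr (_ * _).
by rewrite mpolyXE_id !rmorph_prod; apply: eq_bigr => i _; rewrite !rmorphXn hX.
Qed.

Lemma Hex x : exists k, own k == x.
Proof.
have : (0 < #|[set k | own k == x]|)%N by rewrite own_card.
by case/card_gt0P => k; rewrite inE => h; exists k.
Qed.

Definition first x := xchoose (Hex x).
Lemma firstP x : own (first x) = x.
Proof. by apply/eqP; exact: (xchooseP (Hex x)). Qed.

Definition sg (u : 'X_{1..n}) : 'X_{1..N'} :=
  [multinom (if k == first (own k) then u (own k) else 0%N) | k < N'].
Definition fsupp (w : 'X_{1..N'}) : bool := [forall k, (k != first (own k)) ==> (w k == 0%N)].

Lemma pi_monE w x : pi_mon own w x = (\sum_(k | own k == x) w k)%N.
Proof. by rewrite /pi_mon mnmE. Qed.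

Lemma sum_own (F : 'I_N' -> nat) x :
  (forall k, own k == x -> k != first x -> F k = 0%N) ->
  (\sum_(k | own k == x) F k)%N = F (first x).
Proof.
move=> H; rewrite (bigD1 (first x)) ?firstP ?eqxx //= big1 ?addn0 //.
by move=> k /andP [ok kf]; apply: H.
Qed.

Lemma pi_sg u : pi_mon own (sg u) = u.
Proof.
apply/mnmP => x; rewrite pi_monE (sum_own (F := fun k => sg u k)).
  by rewrite mnmE firstP eqxx.
move=> k /eqP ok kf; rewrite mnmE ok ifN //.
Qed.

Lemma fsupp_sg u : fsupp (sg u).
Proof. by apply/forallP => k; apply/implyP => kf; rewrite mnmE (negbTE kf). Qed.

Lemma sg_pi w : fsupp w -> sg (pi_mon own w) = w.
Proof.
move=> /forallP fw; apply/mnmP => k; rewrite mnmE; case: ifP => [/eqP kf|kf].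
  rewrite pi_monE (sum_own (F := fun k => w k)) -?kf //.
  move=> k' /eqP ok' kf'; apply/eqP; move: (fw k') => /implyP; apply; by rewrite ok' -kf.
by have := fw k; rewrite kf => /implyP /(_ isT) /eqP ->.
Qed.

Lemma f_proof (k : 'I_(size s)) : (index (sg (nth 0%MM s k)) salpha < size salpha)%N.
Proof. by rewrite index_mem; apply/salpha_def; rewrite pi_sg mem_nth. Qed.
Definition fI k := Ordinal (f_proof k).
Lemma g_proof (w : 'I_(size salpha)) : (index (pi_mon own (nth 0%MM salpha w)) s < size s)%N.
Proof. by rewrite index_mem; apply/salpha_def; apply: mem_nth. Qed.
Definition gI w := Ordinal (g_proof w).
Definition keepI : pred 'I_(size salpha) := fun w => fsupp (nth 0%MM salpha w).

Lemma nth_fI k : nth 0%MM salpha (fI k) = sg (nth 0%MM s k).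
Proof. by rewrite /= nth_index //; apply/salpha_def; rewrite pi_sg mem_nth. Qed.

Lemma gfI k : gI (fI k) = k.
Proof. by apply: val_inj; rewrite /= nth_fI pi_sg index_uniq. Qed.

Lemma fgI w : keepI w -> fI (gI w) = w.
Proof.
move=> kw; apply: val_inj => /=.
rewrite nth_index; last by apply/salpha_def; apply: mem_nth.
by rewrite sg_pi // index_uniq.
Qed.

Lemma kfI k : keepI (fI k).
Proof. by rewrite /keepI nth_fI fsupp_sg. Qed.

Lemma Xsg u : 'X_[sg u] = \prod_(x < n) 'X_(first x) ^+ u x :> {mpoly K[N']}.
Proof.
rewrite mpolyXE_id (partition_big own xpredT) //=; apply: eq_bigr => x _.
rewrite (bigD1 (first x)) ?firstP //= big1 ?mulr1; first by rewrite mnmE firstP eqxx.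
move=> k /andP [/eqP ok kf]; rewrite mnmE ok ifN ?expr0 //.
Qed.

Definition hQ (k : 'I_N') : {mpoly K[n]} := if k == first (own k) then 'X_(own k) else 0.

Lemma XQ (v : 'X_{1..N'}) : mmap1 hQ v = if fsupp v then 'X_[pi_mon own v] else 0.
Proof.
rewrite /mmap1 (partition_big own xpredT) //=.
case: ifP => fv.
  rewrite mpolyXE_id; apply: eq_bigr => x _.
  rewrite (bigD1 (first x)) ?firstP //= big1 ?mulr1.
    rewrite /hQ firstP eqxx pi_monE (sum_own (F := fun k => v k)) //.
    move=> k /eqP ok kf; move/forallP: fv => /(_ k) /implyP; rewrite ok => /(_ kf) /eqP //.
  move=> k /andP [/eqP ok kf]; move/forallP: fv => /(_ k) /implyP.
  by rewrite ok => /(_ kf) /eqP ->; rewrite expr0.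
move/negbT: fv; rewrite negb_forall => /existsP [k]; rewrite negb_imply => /andP [kf vk].
rewrite (bigD1 (own k)) //= (bigD1 k) ?eqxx //= /hQ (negbTE kf) expr0n (negbTE vk).
by rewrite !mul0r.
Qed.

Lemma idealP_toric N0 (s0 : seq 'X_{1..N0}) : idealP (@toric_ideal K N0 s0).
Proof.
split; first split.
- by rewrite /toric_ideal /toric_map raddf0.
- move=> a x y; rewrite /toric_ideal /toric_map => hx hy.
  by rewrite raddfD /= mmap_Z hx hy scaler0 addr0.
- by move=> t p; rewrite /toric_ideal /toric_map => hp; rewrite rmorphM /= hp mulr0.
Qed.

Lemma main_ineq i j :
  (betti (@toric_ideal K n s) i j <= betti (@toric_ideal K N' salpha) i j)%N.
Proof.
apply: (betti_relabel gfI fgI kfI i j (idealP_toric s) (idealP_toric salpha)).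
- move=> p; rewrite /toric_ideal => hp.
  pose iota := mmap (@mpolyC N' K) (fun x : 'I_n => 'X_(first x)).
  have E := @rmorph_eq_mpoly _ _ (@toric_map K N' salpha \o mmap (@mpolyC (size salpha) K) (hs K fI))%FUN
     (iota \o @toric_map K n s)%FUN.
  have E2 : ((@toric_map K N' salpha \o mmap (@mpolyC (size salpha) K) (hs K fI)) p =
     (iota \o @toric_map K n s) p)%FUN.
    apply: E => [c|k]; first by rewrite /comp /toric_map /iota /= !mmapC.
    by rewrite /comp /toric_map /iota /= !mmap_Xi /hs mmapX nth_fI Xsg.
  by move: E2; rewrite /comp hp /iota mmap0.
- move=> p; rewrite /toric_ideal => hp.
  pose Q := mmap (@mpolyC n K) hQ.
  have E := @rmorph_eq_mpoly _ _ (Q \o @toric_map K N' salpha)%FUN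
     (@toric_map K n s \o mmap (@mpolyC (size s) K) (hr K gI keepI))%FUN.
  have E2 : ((Q \o @toric_map K N' salpha) p =
     (@toric_map K n s \o mmap (@mpolyC (size s) K) (hr K gI keepI)) p)%FUN.
    apply: E => [c|w]; first by rewrite /comp /toric_map /Q /= !mmapC.
    rewrite /comp /toric_map /Q /= !mmap_Xi mmapX XQ /hr.
    rewrite /keepI; case: ifP => kw; last by rewrite mmap0.
    by rewrite mmap_Xi /= nth_index //; apply/salpha_def; apply: mem_nth.
  by move: E2; rewrite /comp hp /Q mmap0 => <-.
Qed.
End Inst.


Unset Implicit Arguments.
Theorem proposition2p18
  (K : fieldType) (n : nat) (alpha : 'I_n -> nat)
  (alpha_pos : forall i, (0 < alpha i)%N)
  (s : seq 'X_{1..n}) (s_uniq : uniq s)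
  (s_min : div_minimal s)
  (s_homog : homogeneous_toric K s)
  (N' : nat) (own : 'I_N' -> 'I_n)
  (own_card : forall i, #|[set k | own k == i]| = alpha i)
  (salpha : seq 'X_{1..N'}) (salpha_uniq : uniq salpha)
  (salpha_def : forall w : 'X_{1..N'}, w \in salpha <-> pi_mon own w \in s) :
  forall i j : nat,
    (betti (@toric_ideal K n s) i j <= betti (@toric_ideal K N' salpha) i j)%N.
Proof.
move=> i j.
exact: (main_ineq K alpha_pos s_uniq own_card salpha_uniq salpha_def i j).
Qed.
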